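(* Let $e=2$ and $\Lambda=\Lambda_0$. If $\lambda$ is an alternating $2$-regular partition whose last (smallest nonzero) part is odd, then the element $b_\lambda\in B(\Lambda_0)$ labelled by $\lambda$ is external.
   Context: Setting (level one, $e=2$). Let $\mathfrak g$ be the affine Lie algebra of type $A^{(1)}_1$ with simple roots $\alpha_0,\alpha_1$, simple coroots $h_0,h_1$, fundamental weights $\Lambda_0,\Lambda_1$ and null root $\delta=\alpha_0+\alpha_1$. $B(\Lambda_0)$ is the crystal of the irreducible integrable highest weight module $V(\Lambda_0)$, with Kashiwara operators $\tilde e_i,\tilde f_i$ ($i\in\{0,1\}$). Its elements are labelled by $2$-regular partitions (partitions with distinct parts) in the standard Misra–Miwa/Kleshchev realization with the $e$-regular convention: the node in row $x$, column $y$ of a Young diagram has residue $(y-x)\bmod 2$, the weight of $\lambda$ is $\Lambda_0-\sum_{\text{nodes}}\alpha_{\mathrm{res}}$, and $\tilde f_i$ adds a good $i$-node. A $2$-regular partition is \emph{alternating} if the parities of its consecutive nonzero parts alternate between odd and even. For $b\in B(\Lambda)$, the hub of $b$ is $\theta(b)=(\theta_0,\theta_1)$ with $\theta_i=\langle \mathrm{wt}(b),h_i\rangle$. An element $b$ is \emph{external} if for every $i$ with $\theta_i\ge 0$ one has $\tilde e_i(b)=0$. *)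

(* Defs.v *)
(* Crystal B(Lambda_0) of type A_1^(1) (e = 2), realized on
   2-regular partitions (Misra--Miwa / Kleshchev, e-regular convention). *)
From HB Require Import structures.
From mathcomp Require Import all_boot all_order all_algebra.
Set Implicit Arguments. Unset Strict Implicit. Unset Printing Implicit Defensive.
Import GRing.Theory Num.Theory.
Local Open Scope ring_scope.
Local Open Scope nat_scope.

(* A partition is a seq of its nonzero parts, weakly decreasing.
   Rows are 1-indexed: [part la r] is the r-th part (0 beyond the end). *)
Definition part (la : seq nat) (r : nat) : nat := nth 0 la r.-1.

Definition is_2regular (la : seq nat) : bool :=
  sorted gtn la && all (fun p => 0 < p) la.

Definition alternating (la : seq nat) : bool :=
  sorted (fun a b => odd a != odd b) la.

Definition res (x y : nat) : nat := absz ((Posz y - Posz x)%R %% Posz 2)%Z.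

Definition nodes (la : seq nat) : seq (nat * nat) :=
  flatten [seq [seq (x, y) | y <- iota 1 (part la x)] | x <- iota 1 (size la)].

Definition Lambda0_h (i : 'I_2) : int := if (i == 0 :> nat) then Posz 1 else Posz 0.

Definition cartan (i j : nat) : int := if i == j then Posz 2 else (- Posz 2)%R.

(* hub: theta_i = <wt(la), h_i>, wt(la) = Lambda_0 - sum_{nodes} alpha_res *)
Definition theta (la : seq nat) (i : 'I_2) : int :=
  (Lambda0_h i - \sum_(n <- nodes la) cartan i (res n.1 n.2))%R.

Definition remi (la : seq nat) (i : nat) (r : nat) : bool :=
  [&& 0 < r, r <= size la, part la r.+1 < part la r & res r (part la r) == i].

Definition addi (la : seq nat) (i : nat) (r : nat) : bool :=
  [&& 0 < r, r <= (size la).+1, (r == 1) || (part la r < part la r.-1)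
    & res r (part la r).+1 == i].

Definition between (s r : nat) : seq nat := iota s.+1 (r - s.+1).

(* Kleshchev: a removable i-node A (in row r) is normal if whenever B is an
   addable i-node above A (in row s < r), there are more removable i-nodes
   between A and B than addable i-nodes between A and B. *)
Definition normal (la : seq nat) (i : nat) (r : nat) : bool :=
  remi la i r &&
  all (fun s => addi la i s ==>
         (count (addi la i) (between s r) < count (remi la i) (between s r)))
      (iota 1 r.-1).

(* Kashiwara operator e~_i: remove the good (= lowest normal) i-node, if any *)
Definition e_tilde (i : 'I_2) (la : seq nat) : option (seq nat) :=
  let rs := [seq r <- iota 1 (size la) | normal la i r] in
  if rs is [::] then None
  else let r := last 0 rs in
       Some (filter (fun p => 0 < p) (set_nth 0 la r.-1 (part la r).-1)).

Definition external (la : seq nat) : Prop :=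
  forall i : 'I_2, (0 <= theta la i)%R -> e_tilde i la = None.

(* Main.v *)
Set Warnings "-notation-overridden -ambiguous-paths".
Require Import Defs.
From mathcomp Require Import all_boot all_order all_algebra zify.
Import GRing.Theory Num.Theory.

Lemma res_odd x y : res x y = odd (x + y).
Proof.
rewrite /res.
have -> : (Posz y - Posz x = (- Posz x) * 2 + Posz (y + x))%R.
  by rewrite PoszD; lia.
by rewrite modzMDl modz_nat /= modn2 addnC.
Qed.

Lemma alt_nth la : alternating la -> odd (last 0 la) ->
  forall i, i < size la -> odd (nth 0 la i) = odd (size la - i).
Proof.
elim: la => [//|a l IH] /= Hs Hl [|i] Hi /=.
- case: l IH Hs Hl {Hi} => [|b l] IH Hs Hl /=; first by rewrite Hl.
  move: Hs => /= /andP[Hab Hp].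
  have := IH Hp Hl 0 erefl => /= Hb.
  by move: Hab; rewrite Hb /=; case: (odd a); case: (odd (size l)).
- case: l IH Hs Hl Hi => [//|b l] IH Hs Hl Hi.
  move: Hs => /= /andP[_ Hp].
  by rewrite IH.
Qed.

Lemma par_row la r : alternating la -> odd (last 0 la) -> 0 < r <= size la ->
  odd (part la r + r) = ~~ odd (size la).
Proof.
move=> Ha Hl /andP[H0 Hr]; rewrite /part oddD alt_nth //; last by lia.
rewrite -oddD.
have -> : size la - r.-1 + r = (size la).+1 by lia.
by [].
Qed.

Lemma row_sum (i x p : nat) : i < 2 ->
  (\sum_(y <- iota 1 p) cartan i (res x y) =
    if odd p then cartan i (~~ odd x) else 0)%R.
Proof.
move=> Hi2; elim: p => [|p IH]; first by rewrite big_nil.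
rewrite -[p.+1]addn1 iotaD big_cat big_seq1 IH res_odd.
have E : odd (x + (1 + p)) = ~~ odd x (+) odd p by rewrite addnA oddD addn1 oddS.
rewrite E (addn1 p) oddS.
move: (odd x) (odd p) => b c {IH E}; move: Hi2.
rewrite /cartan.
case: b; case: c => /=; case: i => [|[|i]] //=.
Qed.

Theorem mainTheorem1 (la : seq nat) :
  is_2regular la -> alternating la -> odd (last 0 la) -> external la.
Proof.
move=> _ Ha Hl i Hth.
set n := size la.
have Hn : 0 < n by rewrite /n; case: la Ha Hl {Hth n}.
have Hres : forall r, r \in iota 1 n -> res r (part la r) = ~~ odd n.
  move=> r; rewrite mem_iota => Hr.
  by rewrite res_odd addnC par_row //; lia.
case: (eqVneq (val i) (~~ odd n)) => Hi.
- exfalso; move: Hth; rewrite /theta /nodes big_flatten /= big_map.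
  have Hrow : forall x, x \in iota 1 n ->
     (\sum_(j <- [seq (x, y) | y <- iota 1 (part la x)]) cartan i (res j.1 j.2)
       = if odd (part la x) then 2 else 0)%R.
    move=> x Hx; rewrite big_map row_sum ?ltn_ord //.
    case Ho: (odd (part la x)) => //.
    have := Hres x Hx; rewrite res_odd oddD Ho Hi addbT => <-.
    by rewrite /cartan eqxx.
  rewrite (eq_big_seq _ Hrow) /=.
  have -> : iota 1 n = iota 1 n.-1 ++ [:: n].
    by rewrite -{1}(prednK Hn) -[n.-1.+1]addn1 iotaD /= add1n prednK.
  rewrite big_cat big_seq1 /part nth_last Hl.
  set S := \big[_/_]_(i0 <- iota 1 n.-1) _.
  have : (0 <= S)%R.
    by apply: sumr_ge0 => j _; case: ifP.
  rewrite /Lambda0_h; case: ifP => _ H0 /=; rewrite -/(S + 2)%R; lia.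
- rewrite /e_tilde (eq_in_filter (a2 := pred0)) ?filter_pred0 //.
  move=> r Hr /=; apply/negbTE; rewrite /normal /remi Hres //.
  by apply/negP => /andP[/and4P[_ _ _ /eqP E] _]; rewrite E eqxx in Hi.
Qed.
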